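(* Let $\tau = \frac{1+\sqrt{5}}{2}$. Then the infinite product $\prod_{n=1}^{\infty} \left(1 - \frac{1}{\tau^n}\right)^{\frac{\mu(n) - \varphi(n)}{n}}$ converges and $$e = \prod_{n=1}^{\infty} \left(1 - \frac{1}{\tau^n}\right)^{\frac{\mu(n) - \varphi(n)}{n}}.$$
   Context: $\tau=\frac{1+\sqrt5}{2}$ is the golden ratio. $\varphi(n)$ is Euler's totient function (the number of integers $1\le k\le n$ with $\gcd(k,n)=1$). $\mu(n)$ is the Möbius function: $\mu(1)=1$, $\mu(n)=0$ if $n$ is not squarefree, and $\mu(n)=(-1)^r$ if $n$ is squarefree with $r$ distinct prime factors. $e$ is the base of the natural logarithm. *)

(* Defs.v *)
From mathcomp Require Import all_boot.
From Stdlib Require Import Reals.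

Definition euler_phi (n : nat) : nat := totient n.

(* Möbius function: mu 1 = 1, mu n = 0 if n not squarefree,
   mu n = (-1)^r if n squarefree with r distinct prime factors. *)
Definition moebius (n : nat) : Z :=
  if all (fun p => logn p n == 1) (primes n)
  then (if odd (size (primes n)) then (-1)%Z else 1%Z)
  else 0%Z.

Fixpoint partial_prod (f : nat -> R) (N : nat) : R :=
  match N with
  | O => 1%R
  | S k => (partial_prod f k * f (S k))%R
  end.

Definition tau : R := ((1 + sqrt 5) / 2)%R.

(* Main.v *)
Require Import Defs.
From Stdlib Require Import Reals Lra Lia.
From Coquelicot Require Import Coquelicot.
Open Scope R_scope.

Fixpoint polyS (K : nat) (t : R) : R :=
  match K with O => 0 | S K' => polyS K' t + t ^ (S K') / INR (S K') end.
Fixpoint geomS (K : nat) (t : R) : R :=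
  match K with O => 0 | S K' => geomS K' t + t ^ K' end.

Lemma is_derive_polyS K t : is_derive (polyS K) t (geomS K t).
Proof.
induction K as [|K IH].
- simpl. auto_derive; easy.
- change (is_derive (fun t => polyS K t + t^(S K)/INR (S K)) t (geomS K t + t^K)).
  apply (is_derive_plus (polyS K) (fun t => t^(S K)/INR (S K))); [exact IH|].
  auto_derive; [easy|]. 
  simpl pred. change (match K with 0%nat => 1 | S _ => INR K + 1 end) with (INR (S K)).
  field. apply not_0_INR; lia.
Qed.

Lemma geomS_id K t : (1 - t) * geomS K t = 1 - t ^ K.
Proof. induction K as [|K IH]; simpl; [ring|]. rewrite Rmult_plus_distr_l, IH. ring. Qed.

Lemma polyS0 K : polyS K 0 = 0.
Proof. induction K as [|K IH]; [easy|]. change (polyS K 0 + 0 ^ S K / INR (S K) = 0). rewrite IH. simpl pow. unfold Rdiv. ring. Qed.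

Lemma log_bound K y : 0 <= y < 1 ->
  Rabs (ln (1 - y) + polyS K y) <= y ^ (S K) / (1 - y).
Proof.
intros [y0 y1].
set (g := fun t => ln (1 - t) + polyS K t).
set (dg := fun t => - / (1 - t) + geomS K t).
assert (Hd : forall t, t < 1 -> is_derive g t (dg t)).
{ intros t t1. unfold g, dg.
  apply (is_derive_plus (fun t => ln (1 - t)) (polyS K)).
  - auto_derive; [lra|]. field. lra.
  - apply is_derive_polyS. }
destruct (MVT_gen g 0 y dg) as [c [Hc E]].
- intros t Ht. apply Hd. rewrite Rmax_right in Ht; lra.
- intros t Ht. apply derivable_continuous_pt. exists (dg t).
  apply is_derive_Reals. apply Hd. rewrite Rmax_right in Ht; lra.
- rewrite Rmin_left in Hc by lra. rewrite Rmax_right in Hc by lra.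
  assert (g0 : g 0 = 0) by (unfold g; rewrite polyS0, Rminus_0_r, ln_1; ring).
  rewrite g0, !Rminus_0_r in E.
  change (ln (1 - y) + polyS K y) with (g y). rewrite E.
  assert (dgc : dg c = - (c ^ K / (1 - c))).
  { unfold dg. apply (Rmult_eq_reg_l (1 - c)); [|lra].
    rewrite Rmult_plus_distr_l, geomS_id. field. lra. }
  rewrite dgc, Rabs_mult, Rabs_Ropp, Rabs_pos_eq.
  2: { apply Rmult_le_pos. apply pow_le; lra. left; apply Rinv_0_lt_compat; lra. }
  rewrite Rabs_pos_eq by lra.
  simpl. unfold Rdiv.
  replace (y * y ^ K * / (1 - y)) with ((y ^ K * / (1 - y)) * y) by ring.
  apply Rmult_le_compat_r; [lra|].
  apply Rmult_le_compat.
  + apply pow_le; lra.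
  + left; apply Rinv_0_lt_compat; lra.
  + apply pow_incr; lra.
  + apply Rinv_le_contravar; lra.
Qed.

Definition xr := / tau.

Lemma tau_sq : tau * tau = tau + 1 /\ 3/2 < tau.
Proof.
assert (H5 : sqrt 5 * sqrt 5 = 5) by (apply sqrt_sqrt; lra).
assert (Hs : 0 <= sqrt 5) by apply sqrt_pos.
assert (Hs2 : 2 < sqrt 5) by nra.
unfold tau; split; nra.
Qed.

Lemma xr_facts : 0 < xr /\ xr < 1 /\ 1 - xr = xr ^ 2 /\ xr <= 2/3.
Proof.
destruct tau_sq as [H Ht].
assert (x0 : 0 < xr) by (unfold xr; apply Rinv_0_lt_compat; lra).
assert (x23 : xr <= 2/3).
{ unfold xr. replace (2/3) with (/ (3/2)) by field. left; apply Rinv_lt_contravar; lra. }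
split; [exact x0|]. split; [lra|]. split; [|exact x23].
unfold xr. apply (Rmult_eq_reg_l (tau*tau)); [|nra].
replace (tau*tau*(1 - /tau)) with (tau*tau - tau) by (field; lra).
replace (tau*tau*(/tau)^2) with 1 by (field; lra). lra.
Qed.

Lemma bernoulli h N : 0 <= h -> 1 + INR N * h <= (1 + h) ^ N.
Proof.
intro h0. induction N as [|N IH]; [simpl; lra|].
rewrite S_INR. simpl pow. assert (0 <= INR N) by apply pos_INR. nra.
Qed.

Lemma sq_geom_lim x : 0 <= x <= 2/3 -> forall eps, 0 < eps ->
  exists N0, forall N, (N >= N0)%nat -> INR N ^ 2 * x ^ N < eps.
Proof.
intros [x0 x1] eps e0.
set (q := (11/10) ^ 2 * x).
assert (q0 : 0 <= q) by (unfold q; nra).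
assert (q1 : Rabs q < 1) by (rewrite Rabs_pos_eq by lra; unfold q; nra).
destruct (pow_lt_1_zero q q1 (eps / 100)) as [N0 HN0]; [lra|].
exists N0. intros N HN. specialize (HN0 N HN). rewrite Rabs_pos_eq in HN0 by (apply pow_le; lra).
assert (HB : INR N <= 10 * (11/10) ^ N).
{ generalize (bernoulli (1/10) N). replace (1 + 1/10) with (11/10) by field. lra. }
assert (Hn0 : 0 <= INR N) by apply pos_INR.
assert (HB2 : INR N ^ 2 <= 100 * ((11/10)^2) ^ N).
{ rewrite <- pow_mult, Nat.mul_comm, pow_mult. simpl. nra. }
assert (Hq : ((11/10)^2)^N * x ^ N = q ^ N) by (unfold q; rewrite Rpow_mult_distr; reflexivity).
assert (0 <= x ^ N) by (apply pow_le; lra).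
nra.
Qed.

Lemma mu_abs n : Rabs (IZR (moebius n)) <= 1.
Proof.
unfold moebius. destruct (seq.all _ _); [destruct (ssrnat.odd _)|];
  [replace (IZR (-1)) with (-1) by (simpl; lra)|replace (IZR 1) with 1 by (simpl; lra)|replace (IZR 0) with 0 by (simpl; lra)];
  unfold Rabs; destruct Rcase_abs; lra.
Qed.

Close Scope R_scope.
From mathcomp Require Import all_boot all_order all_algebra.
From mathcomp Require Import Rstruct.
From mathcomp Require cyclic.
From mathcomp Require Import zify.
Import Order.TTheory GRing.Theory Num.Theory.

Lemma moebius1 : moebius 1 = Zpos xH.
Proof. reflexivity. Qed.

Lemma moebius_pM p e : prime p -> ~~ (p %| e) -> 0 < e ->
  moebius (p * e) = Z.opp (moebius e).
Proof.
move=> pp npe e0.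
have p0 := prime_gt0 pp.
have pe : perm_eq (primes (p * e)) (p :: primes e).
  apply: uniq_perm; first exact: primes_uniq.
    rewrite /= primes_uniq andbT mem_primes negb_and negb_and npe.
    by rewrite !orbT.
  move=> q; rewrite in_cons primesM // primes_prime //.
  by rewrite in_cons in_nil orbF.
rewrite /moebius (perm_size pe) (perm_all _ pe) /=.
have -> : logn p (p * e) == 1.
  rewrite lognM // logn_prime // eqxx logn_coprime //.
  by rewrite prime_coprime.
have -> : all (fun q => logn q (p * e) == 1) (primes e) =
          all (fun q => logn q e == 1) (primes e).
  apply: eq_in_all => q; rewrite mem_primes => /and3P [qp _ qe].
  rewrite lognM // logn_prime //.
  case: (eqVneq q p) => [qpE |]; first by rewrite -qpE qe in npe.
  by rewrite add0n.
case: (all _ _); last by [].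
by case: (odd _).
Qed.

Lemma moebius_sq0 p d : prime p -> 0 < d -> p ^ 2 %| d -> moebius d = Z0.
Proof.
move=> pp d0 h.
rewrite /moebius.
have -> : all (fun q => logn q d == 1) (primes d) = false.
  apply/negbTE/allPn; exists p.
    by rewrite -logn_gt0; move: h; rewrite pfactor_dvdn //; case: logn.
  by move: h; rewrite pfactor_dvdn //; case: logn => [|[]].
by [].
Qed.

Local Open Scope ring_scope.
Definition muR (d : nat) : R := IZR (moebius d).

Lemma muR_pM p e : prime p -> ~~ (p %| e)%N -> (0 < e)%N -> muR (p * e)%N = - muR e.
Proof. by move=> pp npe e0; rewrite /muR moebius_pM // opp_IZR RoppE. Qed.

Lemma sum_divisors_perm (T : nat -> R) s m : (0 < m)%N -> uniq s ->
  (forall d, (d %| m)%N -> d \in s) ->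
  \sum_(d <- s | (d %| m)%N) T d = \sum_(d <- divisors m) T d.
Proof.
move=> m0 us hs; rewrite -big_filter; apply: perm_big; apply: uniq_perm.
- exact: filter_uniq.
- exact: divisors_uniq.
move=> d; rewrite mem_filter -dvdn_divisors //.
by apply/andP/idP => [[]//|h]; split => //; apply: hs.
Qed.

Lemma sum_moebius m : (0 < m)%N -> \sum_(d <- divisors m) muR d = (m == 1)%:R.
Proof.
move=> m0.
have [->|m1] := eqVneq m 1%N.
  by rewrite /divisors /= big_cons big_nil /muR moebius1 addr0.
have m1' : (1 < m)%N by case: m m0 m1 => [|[|]].
set p := pdiv m.
have pp : prime p := pdiv_prime m1'.
have p0 := prime_gt0 pp.
have pm : (p %| m)%N := pdiv_dvd m.
set m' := (m %/ p)%N.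
have mE : m = (p * m')%N by rewrite /m' mulnC divnK.
have m'0 : (0 < m')%N by move: m0; rewrite mE muln_gt0 => /andP[].
clearbody m' p.
rewrite (bigID (fun d => (p %| d)%N)) /=.
have A : \sum_(d <- divisors m | (p %| d)%N) muR d = \sum_(e <- divisors m') muR (p * e)%N.
  rewrite -big_filter -(big_map (muln p) xpredT).
  apply: perm_big; apply: uniq_perm.
  - exact/filter_uniq/divisors_uniq.
  - rewrite map_inj_uniq ?divisors_uniq //; by move=> a b /eqP; rewrite eqn_pmul2l // => /eqP.
  move=> d; rewrite mem_filter -dvdn_divisors //.
  apply/idP/mapP.
    move=> /andP[pd dm]; exists (d %/ p)%N.
      rewrite -dvdn_divisors // -(dvdn_pmul2l p0) -mE.
      by rewrite mulnC divnK.
    by rewrite mulnC divnK.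
  move=> [e]; rewrite -dvdn_divisors // => em ->.
  by rewrite dvdn_mulr //= mE dvdn_pmul2l.
have B : \sum_(d <- divisors m | ~~ (p %| d)%N) muR d =
         \sum_(d <- divisors m' | ~~ (p %| d)%N) muR d.
  rewrite -big_filter -[RHS]big_filter; apply: perm_big; apply: uniq_perm.
  - exact/filter_uniq/divisors_uniq.
  - exact/filter_uniq/divisors_uniq.
  move=> d; rewrite !mem_filter -!dvdn_divisors //.
  case pd: (p %| d)%N => //=.
  rewrite mE; apply/idP/idP; last by apply: dvdn_mull.
  rewrite Gauss_dvdr // coprime_sym prime_coprime //; exact/negbT.
rewrite A B (bigID (fun e => (p %| e)%N)) /= big1_seq; last first.
  move=> e /andP[pe]; rewrite -dvdn_divisors // => em.
  apply/eqP; rewrite /muR (@moebius_sq0 p) //.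
    by rewrite muln_gt0 p0; apply: dvdn_gt0 em.
  by rewrite expnS expn1 dvdn_pmul2l.
rewrite add0r -big_split /= big1_seq ?(negbTE m1) // => e /andP[npe].
rewrite -dvdn_divisors // => em.
by rewrite muR_pM ?addNr // (dvdn_gt0 m'0 em).
Qed.

Lemma sum_c m : (0 < m)%N ->
  \sum_(d <- divisors m) (muR d - (totient d)%:R) = (m == 1)%:R - m%:R.
Proof.
move=> m0; rewrite sumrB sum_moebius //; congr (_ - _).
have := cyclic.sum_totient_dvd m.
move/(congr1 (fun n : nat => n%:R : R)); rewrite natr_sum => <-.
rewrite -(big_mkord (fun d => (d %| m)%N) (fun d => (totient d)%:R)).
rewrite sum_divisors_perm //; first exact: iota_uniq.
move=> d dm; rewrite mem_iota add0n /= ltnS; exact: dvdn_leq.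
Qed.

Lemma regroup_inner (G : nat -> nat -> R) N n : (0 < n)%N ->
  \sum_(1 <= k < N.+1 | (n * k <= N)%N) G n k =
  \sum_(1 <= m < N.+1 | (n %| m)%N) G n (m %/ n)%N.
Proof.
move=> n0.
rewrite -big_filter -[RHS]big_filter.
transitivity (\sum_(m <- [seq (n * k)%N | k <- [seq k <- index_iota 1 N.+1 | (n*k <= N)%N]]) G n (m %/ n)%N).
  by rewrite big_map; apply: eq_bigr => k _; rewrite mulKn.
apply: perm_big; apply: uniq_perm.
- rewrite map_inj_uniq; first exact/filter_uniq/iota_uniq.
  by move=> a b /eqP; rewrite eqn_pmul2l // => /eqP.
- exact/filter_uniq/iota_uniq.
move=> m; rewrite mem_filter mem_iota; apply/mapP/idP.
  move=> [k]; rewrite mem_filter mem_iota => /andP[nkN /andP[k1 kN]] ->.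
  rewrite dvdn_mulr //=; apply/andP; split; first by rewrite muln_gt0 n0.
  lia.
move=> /and3P[nm m1 mN]; exists (m %/ n)%N; last by rewrite mulnC divnK.
have mE : (n * (m %/ n))%N = m by rewrite mulnC divnK.
rewrite mem_filter mem_iota mE.
have : (m %/ n <= m)%N by exact: leq_div.
have : (0 < m %/ n)%N by rewrite divn_gt0 // dvdn_leq.
lia.
Qed.

Lemma regroup (G : nat -> nat -> R) N :
  \sum_(1 <= n < N.+1) \sum_(1 <= k < N.+1 | (n * k <= N)%N) G n k =
  \sum_(1 <= m < N.+1) \sum_(d <- divisors m) G d (m %/ d)%N.
Proof.
transitivity (\sum_(1 <= n < N.+1) \sum_(1 <= m < N.+1 | (n %| m)%N) G n (m %/ n)%N).
  apply: eq_big_nat => n /andP[n0 _]; exact: regroup_inner.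
under eq_bigr do rewrite big_mkcond.
rewrite exchange_big_nat.
apply: eq_big_nat => m /andP[m0 mN].
rewrite -big_mkcond sum_divisors_perm //; first exact: iota_uniq.
move=> d dm; rewrite mem_iota.
have := dvdn_gt0 m0 dm; have := dvdn_leq m0 dm; lia.
Qed.


From mathcomp.algebra_tactics Require Import ring lra.
Local Open Scope ring_scope.

Lemma xr_gt0 : 0 < xr.
Proof. by have [h _] := xr_facts; apply/RltP. Qed.
Lemma xr_lt1 : xr < 1.
Proof. by have [_ [h _]] := xr_facts; apply/RltP. Qed.
Lemma xr_sq : 1 - xr = xr ^+ 2.
Proof. by have [_ [_ [h _]]] := xr_facts; rewrite -RminusE -RpowE. Qed.

Definition cc n : R := muR n - (totient n)%:R.
Definition aa n : R := cc n / n%:R.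
Definition LL N : R := \sum_(1 <= n < N.+1) aa n * ln (1 - xr ^+ n).

Lemma totient_le n : (totient n <= n)%N.
Proof.
rewrite totient_count_coprime.
apply: (@leq_trans (\sum_(0 <= d < n) 1)%N).
  by apply: leq_sum => i _; exact: leq_b1.
by rewrite sum_nat_const_nat muln1 subn0.
Qed.

Lemma aa_bound n : (0 < n)%N -> `|aa n| <= 2.
Proof.
move=> n0.
have hm : `|muR n| <= 1 by rewrite -RabsE; apply/RleP; exact: mu_abs.
have ht : (totient n)%:R <= n%:R :> R by rewrite ler_nat totient_le.
have ht0 : 0 <= (totient n)%:R :> R by [].
have hn : 1 <= n%:R :> R by rewrite ler1n.
have hc : `|cc n| <= 1 + n%:R.
  apply: le_trans (ler_normB _ _) _; rewrite normr_nat; lra.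
rewrite /aa normrM normfV normr_nat ler_pdivrMr; last by lra.
lra.
Qed.

Lemma div_le (a b c d : R) : 0 <= a -> a <= c -> 0 < d -> d <= b -> a / b <= c / d.
Proof.
move=> a0 ac d0 db; have b0 : 0 < b by apply: lt_le_trans db.
apply: ler_pM => //; first by rewrite invr_ge0 ltW.
by rewrite lef_pV2 ?posrE.
Qed.

Lemma polyS_sum K t : polyS K t = \sum_(1 <= k < K.+1) t ^+ k / k%:R.
Proof.
elim: K => [|K IH]; first by rewrite big_geq.
rewrite big_nat_recr // -IH.
have -> : polyS K.+1 t = Rplus (polyS K t) (Rdiv (pow t K.+1) (INR K.+1)) by [].
by rewrite RplusE RdivE RpowE INRE.
Qed.

Lemma xr_pow_le n m : (n <= m)%N -> xr ^+ m <= xr ^+ n.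
Proof. move=> nm; apply: ler_wiXn2l => //; [exact: ltW xr_gt0 | exact: ltW xr_lt1]. Qed.

Lemma log_boundR n N : (0 < n)%N ->
  `|ln (1 - xr ^+ n) + \sum_(1 <= k < N.+1) (xr ^+ n) ^+ k / k%:R| <= xr ^+ N.+1 / (1 - xr).
Proof.
move=> n0.
have y0 : 0 <= xr ^+ n by apply: exprn_ge0; exact: ltW xr_gt0.
have yx : xr ^+ n <= xr by rewrite -[X in _ <= X]expr1; apply: xr_pow_le.
have y1 : xr ^+ n < 1 by apply: le_lt_trans yx xr_lt1.
have h := log_bound N (xr ^+ n) (conj (RleP y0) (RltP y1)).
rewrite RabsE RplusE RminusE RdivE RpowE polyS_sum in h.
move/RleP: h => h. apply: le_trans h _.
apply: div_le.
- exact: exprn_ge0.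
- rewrite -exprM; apply: xr_pow_le; rewrite -[X in (X <= _)%N]mul1n leq_mul2r n0 orbT //.
- rewrite subr_gt0; exact: xr_lt1.
- by rewrite lerB.
Qed.

Lemma S_closed N : (0 < N)%N ->
  \sum_(2 <= m < N.+1) xr ^+ m = 1 - xr ^+ N.+1 / (1 - xr).
Proof.
have x1 : 1 - xr != 0 by rewrite subr_eq0 eq_sym lt_eqF // xr_lt1.
elim: N => [//|N IH] _.
case: N IH => [|N] IH.
  by rewrite big_geq // -xr_sq divff ?subrr.
rewrite big_nat_recr //= IH //.
rewrite [in RHS]exprS.
field; exact: x1.
Qed.

Lemma const_sum N (c : R) : N%:R * c = \sum_(1 <= n < N.+1) c.
Proof. by rewrite sumr_const_nat subn1 /= mulr_natl. Qed.

Lemma LL_bound N : (0 < N)%N ->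
  `|LL N - \sum_(2 <= m < N.+1) xr ^+ m| <=
   N%:R * (2 * (xr ^+ N.+1 / (1 - xr))) + N%:R * (N%:R * (2 * xr ^+ N.+1)).
Proof.
move=> N0.
have x0 := xr_gt0; have x1 := xr_lt1.
set Q := fun n => \sum_(1 <= k < N.+1) (xr ^+ n) ^+ k / k%:R.
set A := \sum_(1 <= n < N.+1) aa n * (ln (1 - xr ^+ n) + Q n).
set O := \sum_(1 <= n < N.+1) \sum_(1 <= k < N.+1 | ~~ (n * k <= N)%N) aa n * ((xr ^+ n) ^+ k / k%:R).
have E : LL N = A - \sum_(1 <= n < N.+1) aa n * Q n.
  rewrite /A /LL -sumrB; by apply: eq_bigr => n _; rewrite mulrDr addrK.
have E2 : \sum_(1 <= n < N.+1) aa n * Q n =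
   \sum_(1 <= n < N.+1) \sum_(1 <= k < N.+1 | (n * k <= N)%N) cc n * (xr ^+ (n * k) / (n * k)%:R) + O.
  rewrite /O -big_split; apply: eq_bigr => n _ /=.
  rewrite /Q mulr_sumr (bigID (fun k => (n * k <= N)%N)) /=; congr (_ + _).
  apply: eq_bigr => k _; rewrite /aa exprM natrM invfM !mulrA; congr (_ * _); exact: mulrAC.
have M : \sum_(1 <= n < N.+1) \sum_(1 <= k < N.+1 | (n * k <= N)%N) cc n * (xr ^+ (n * k) / (n * k)%:R)
   = - \sum_(2 <= m < N.+1) xr ^+ m.
  rewrite (regroup (fun n k => cc n * (xr ^+ (n * k) / (n * k)%:R))).
  transitivity (\sum_(1 <= m < N.+1) ((m == 1)%:R - m%:R) * (xr ^+ m / m%:R)).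
    apply: eq_big_nat => m /andP[m0 _].
    rewrite -sum_c // mulr_suml; apply: eq_big_seq => d.
    rewrite -dvdn_divisors // => dm; rewrite mulnC divnK //.
  rewrite big_ltn // subrr mul0r add0r -sumrN.
  apply: eq_big_nat => m /andP[m2 _].
  have -> : (m == 1%N) = false by case: m m2 => [|[]].
  have m0 : m%:R != 0 :> R by rewrite pnatr_eq0; case: m m2.
  by rewrite sub0r mulNr mulrCA mulfV // mulr1.
have HA : `|A| <= N%:R * (2 * (xr ^+ N.+1 / (1 - xr))).
  apply: le_trans (ler_norm_sum _ _ _) _.
  rewrite const_sum; apply: ler_sum_nat => n /andP[n1 _].
  rewrite normrM; apply: ler_pM => //; [exact: aa_bound | exact: log_boundR].
have HO : `|O| <= N%:R * (N%:R * (2 * xr ^+ N.+1)).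
  apply: le_trans (ler_norm_sum _ _ _) _.
  rewrite const_sum; apply: ler_sum_nat => n /andP[n1 _].
  apply: le_trans (ler_norm_sum _ _ _) _.
  rewrite const_sum big_mkcond /=; apply: ler_sum_nat => k /andP[k1 _].
  have c0 : 0 <= 2 * xr ^+ N.+1 by rewrite mulr_ge0 // exprn_ge0 // ltW.
  case: ifP => hk //.
  rewrite normrM; apply: ler_pM => //; first exact: aa_bound.
  rewrite ger0_norm; last by rewrite divr_ge0 // exprn_ge0 // exprn_ge0 // ltW.
  rewrite -[X in _ <= X]divr1; apply: div_le => //.
  - by rewrite exprn_ge0 // exprn_ge0 // ltW.
  - by rewrite -exprM; apply: xr_pow_le; rewrite ltnNge hk.
  - by rewrite ler1n.
rewrite E E2 M.
set S := \sum_(2 <= m < N.+1) xr ^+ m.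
have -> : A - (- S + O) - S = A - O by ring.
apply: le_trans (ler_normB _ _) _.
exact: lerD HA HO.
Qed.

Definition Bc := GRing.add (GRing.mul 3 (GRing.inv (GRing.add 1 (GRing.opp xr)))) 2.

Lemma Bc_gt0 : 0 < Bc.
Proof.
have : 0 < 3 / (1 - xr) by rewrite divr_gt0 // subr_gt0 xr_lt1.
move=> h; rewrite /Bc. lra.
Qed.

Lemma LL_bound2 N : (0 < N)%N -> `|LL N - 1| <= Bc * (N%:R ^+ 2 * xr ^+ N).
Proof.
move=> N0.
have := @LL_bound N N0; rewrite S_closed //.
set w := (1 - xr)^-1; set u := xr ^+ N; set n := N%:R : R.
have w0 : 0 < w by rewrite invr_gt0 subr_gt0 xr_lt1.
have u0 : 0 <= u by rewrite exprn_ge0 // ltW // xr_gt0.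
have xu : xr * u <= u by rewrite ler_piMl // ltW // ?xr_lt1 ?xr_gt0.
have xu0 : 0 <= xr * u by rewrite mulr_ge0 // ltW // xr_gt0.
have n1 : 1 <= n by rewrite ler1n.
rewrite exprS -/u => h.
have -> : LL N - 1 = (LL N - (1 - xr * u / (1 - xr))) - xr * u / (1 - xr) by ring.
apply: le_trans (ler_normB _ _) _.
rewrite [`|xr * u / (1 - xr)|]ger0_norm; last by rewrite divr_ge0 // subr_ge0 ltW // xr_lt1.
apply: le_trans (lerD h (lexx _)) _.
rewrite /Bc -/w.
have h1 : xr * u * w <= u * w by rewrite ler_wpM2r // ltW.
have h2 : n <= n ^+ 2 by rewrite expr2 ler_peMl // (le_trans ler01 n1).
have uw0 : 0 <= u * w by rewrite mulr_ge0 // ltW.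
have h3 : n * (xr * u * w) <= n ^+ 2 * (u * w).
  apply: (ler_pM _ _ h2 h1); first exact: le_trans ler01 n1.
  by rewrite mulr_ge0 // ltW.
have h4 : n * (n * (xr * u)) <= n ^+ 2 * u.
  rewrite mulrA -expr2; apply: ler_wpM2l => //.
  by rewrite exprn_ge0 // (le_trans ler01 n1).
have h5 : u * w <= n ^+ 2 * (u * w) by rewrite ler_peMl // (le_trans _ h2) // (le_trans ler01 n1).
nra.
Qed.

Lemma LL_S N : LL N.+1 = LL N + aa N.+1 * ln (1 - xr ^+ N.+1).
Proof. by rewrite /LL big_nat_recr. Qed.

Lemma LL0 : LL 0 = 0.
Proof. by rewrite /LL big_geq. Qed.

Lemma term_eq n :
  Rmult (Rdiv (Rminus (IZR (moebius n)) (INR (euler_phi n))) (INR n))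
        (ln (Rminus 1 (Rinv (pow tau n)))) = aa n * ln (1 - xr ^+ n).
Proof.
by rewrite /aa /cc /muR /euler_phi /xr -pow_inv RmultE RdivE RminusE !INRE RpowE.
Qed.

Open Scope R_scope.

Lemma LL_cv : Un_cv LL 1.
Proof.
intros eps e0.
assert (B0 : 0 < Bc) by (apply/RltP; exact: Bc_gt0).
destruct xr_facts as [x0 [x1 [_ x23]]].
destruct (sq_geom_lim xr (conj (Rlt_le _ _ x0) x23) (eps / Bc)) as [N0 HN0].
{ apply Rdiv_lt_0_compat; assumption. }
exists (max N0 1). intros N HN.
have HN1 : (0 < N)%N by move: HN; rewrite /ge; lia.
have hb := @LL_bound2 N HN1.
unfold R_dist.
assert (hb' : Rabs (LL N - 1) <= Bc * (INR N ^ 2 * xr ^ N)).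
{ rewrite RabsE RminusE RmultE RmultE !RpowE INRE. by apply/RleP. }
apply (Rle_lt_trans _ _ _ hb').
specialize (HN0 N ltac:(lia)).
have Hb : Bc * (eps / Bc) = eps.
{ rewrite /Rdiv (Rmult_comm eps) -Rmult_assoc Rinv_r ?Rmult_1_l //. exact: Rgt_not_eq. }
rewrite -[X in _ < X]Hb.
apply Rmult_lt_compat_l; assumption.
Qed.

Lemma pp_exp N :
  partial_prod (fun n : nat =>
        Rpower (1 - / tau ^ n)
               ((IZR (moebius n) - INR (euler_phi n)) / INR n)) N = exp (LL N).
Proof.
induction N as [|N IH].
- by rewrite /= LL0 exp_0.
- rewrite /= IH /Rpower term_eq LL_S -RplusE exp_plus //.
Qed.

Theorem mainTheorem1 :
  Un_cv
    (partial_prod (fun n : nat =>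
        Rpower (1 - / tau ^ n)
               ((IZR (moebius n) - INR (euler_phi n)) / INR n)))
    (exp 1).
Proof.
intros eps e0.
have cv := continuity_seq exp LL 1 (derivable_continuous_pt _ _ (derivable_pt_exp 1)) LL_cv.
destruct (cv eps e0) as [N0 H]. exists N0. intros n Hn. rewrite pp_exp. exact: H.
Qed.
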